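(* Let $\nu\in\mathbb{N}$, let $(X,d)$ be a complete $\nu$-generalized metric space, and let $T:X\to X$ be a Ćirić–Matkowski contraction. Then $T$ has a unique fixed point $z$, and for every $x\in X$ the sequence $\{T^nx\}$ converges to $z$ in the strong sense.
   Context: Let $X$ be a nonempty set, $d:X\times X\to[0,\infty)$, and $\nu\in\mathbb{N}$. $(X,d)$ is a $\nu$-generalized metric space if: (1) $d(x,y)=0$ iff $x=y$; (2) $d(x,y)=d(y,x)$ for all $x,y$; (3) $d(x,y)\le d(x,u_1)+d(u_1,u_2)+\dots+d(u_\nu,y)$ for every set $\{x,u_1,\dots,u_\nu,y\}$ of $\nu+2$ pairwise distinct elements of $X$. A sequence $\{x_n\}$ in $X$ is Cauchy if $\lim_{n\to\infty}\sup\{d(x_n,x_{n+1+m}): m\in\mathbb{Z}^+\}=0$ ($\mathbb{Z}^+$ the nonnegative integers). $\{x_n\}$ converges to $x$ if $d(x,x_n)\to0$; it converges to $x$ in the strong sense if it is Cauchy and converges to $x$. $X$ is complete if every Cauchy sequence in $X$ converges. A map $T:X\to X$ is a Ćirić–Matkowski contraction if $d(Tx,Ty)<d(x,y)$ for all $x\ne y$ in $X$, and for every $\epsilon>0$ there exists $\delta>0$ such that for all $x,y\in X$, $d(x,y)<\delta+\epsilon$ implies $d(Tx,Ty)\le\epsilon$. *)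

(* Defs.v *)
From Stdlib Require Import Reals Lra Lia.
Open Scope R_scope.

Fixpoint rsum (n : nat) (f : nat -> R) : R :=
  match n with
  | O => 0
  | S k => rsum k f + f k
  end.

(* (X,d) is a nu-generalized metric space.  The nu+2 pairwise distinct
   points x, u_1, ..., u_nu, y are encoded as w 0 = x, w i = u_i (1<=i<=nu),
   w (nu+1) = y, with w injective on {0,...,nu+1}. *)
Definition nu_gen_metric {X : Type} (nu : nat) (d : X -> X -> R) : Prop :=
  (forall x y, 0 <= d x y) /\
  (forall x y, d x y = 0 <-> x = y) /\
  (forall x y, d x y = d y x) /\
  (forall w : nat -> X,
      (forall i j, (i <= S nu)%nat -> (j <= S nu)%nat -> i <> j -> w i <> w j) ->
      d (w O) (w (S nu)) <= rsum (S nu) (fun i => d (w i) (w (S i)))).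

(* Cauchy: lim_n sup { d(x_n, x_{n+1+m}) : m >= 0 } = 0, i.e. for every
   eps > 0 there is N such that for n >= N this sup is <= eps. *)
Definition gm_cauchy {X : Type} (d : X -> X -> R) (x : nat -> X) : Prop :=
  forall eps, eps > 0 -> exists N, forall n m, (n >= N)%nat ->
    d (x n) (x (n + 1 + m)%nat) <= eps.

Definition gm_converges {X : Type} (d : X -> X -> R) (x : nat -> X) (z : X) : Prop :=
  Un_cv (fun n => d z (x n)) 0.

Definition gm_converges_strong {X : Type} (d : X -> X -> R) (x : nat -> X) (z : X) : Prop :=
  gm_cauchy d x /\ gm_converges d x z.

Definition gm_complete {X : Type} (d : X -> X -> R) : Prop :=
  forall x : nat -> X, gm_cauchy d x -> exists z, gm_converges d x z.

Definition ciric_matkowski {X : Type} (d : X -> X -> R) (T : X -> X) : Prop :=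
  (forall x y, x <> y -> d (T x) (T y) < d x y) /\
  (forall eps, eps > 0 -> exists delta, delta > 0 /\
     forall x y, d x y < delta + eps -> d (T x) (T y) <= eps).

(* Main.v *)
Require Import Defs.
From Stdlib Require Import Reals Lra Lia Classical.
Open Scope R_scope.

Lemma rsum_le (n:nat) (f : nat -> R) c :
  (forall i, (i<n)%nat -> f i <= c) -> rsum n f <= INR n * c.
Proof.
  induction n; intros H; simpl rsum.
  - simpl. lra.
  - rewrite S_INR. assert (rsum n f <= INR n * c) by (apply IHn; intros; apply H; lia).
    assert (f n <= c) by (apply H; lia). lra.
Qed.

Lemma rsum_lt (n:nat) (f : nat -> R) c :
  (1 <= n)%nat -> (forall i, (i<n)%nat -> f i < c) -> rsum n f < INR n * c.
Proof.
  intros Hn H. destruct n; [lia|]. simpl rsum. rewrite S_INR.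
  assert (rsum n f <= INR n * c) by (apply rsum_le; intros; left; apply H; lia).
  assert (f n < c) by (apply H; lia). lra.
Qed.

Lemma decr_to_zero (b : nat -> R) :
  (forall n, 0 <= b n) ->
  (forall n, b (S n) < b n) ->
  (forall eps, eps > 0 -> exists delta, delta > 0 /\
      forall n, b n < delta + eps -> b (S n) <= eps) ->
  forall t, t > 0 -> exists N, forall n, (n >= N)%nat -> b n < t.
Proof.
  intros Hpos Hdec Hcm t Ht.
  assert (Hmono: forall n j, b (j + n)%nat <= b n).
  { intros n j; induction j; simpl. lra. specialize (Hdec (j+n)%nat). lra. }
  set (S0 := fun y => exists n, y = - b n).
  destruct (completeness S0) as [l [Hub Hlub]].
  - exists 0. intros y [n ->]. specialize (Hpos n). lra.
  - exists (- b 0%nat). exists 0%nat. reflexivity.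
  - assert (Hlow: forall n, - l <= b n).
    { intros n. assert (- b n <= l) by (apply Hub; exists n; reflexivity). lra. }
    assert (Happ: forall s, s > 0 -> exists n, b n < -l + s).
    { intros s Hs. apply NNPP. intro Hno.
      assert (l <= -(-l + s)).
      { apply Hlub. intros y [n ->].
        destruct (Rlt_le_dec (b n) (-l+s)) as [h|h].
        - exfalso; apply Hno; exists n; exact h.
        - lra. }
      lra. }
    destruct (Rlt_le_dec (-l) t) as [Hr|Hr].
    + destruct (Happ (t - -l)) as [n Hn]. lra.
      exists n. intros m Hm. replace m with ((m-n)+n)%nat by lia.
      specialize (Hmono n (m-n)%nat). lra.
    + destruct (Hcm (-l)) as [delta [Hd Hc]]. lra.
      destruct (Happ delta Hd) as [n Hn].
      assert (b (S n) <= -l) by (apply Hc; lra).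
      specialize (Hdec (S n)). specialize (Hlow (S (S n))). lra.
Qed.

Lemma orbit_main (nu : nat) (X : Type) (d : X -> X -> R) (T : X -> X) (x : nat -> X) :
  (1 <= nu)%nat -> nu_gen_metric nu d -> gm_complete d -> ciric_matkowski d T ->
  (forall n, x (S n) = T (x n)) -> (forall n, x (S n) <> x n) ->
  exists z, T z = z /\ gm_converges_strong d x z.
Proof.
  intros Hnu [Hpos [Hzero [Hsym Hpoly]]] Hcomp [Hstr Hcm2] hx hne.
  assert (HT: forall p q, x p <> x q -> d (x (S p)) (x (S q)) < d (x p) (x q)).
  { intros p q h. rewrite !hx. apply Hstr; auto. }
  assert (HTcm: forall eps, eps > 0 -> exists delta, delta > 0 /\ forall p q,
     d (x p) (x q) < delta + eps -> d (x (S p)) (x (S q)) <= eps).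
  { intros eps He. destruct (Hcm2 eps He) as [delta [Hd Hc]]. exists delta; split; auto.
    intros p q h. rewrite !hx. apply Hc; auto. }
  assert (Hdd: forall y, d y y = 0) by (intro y; apply Hzero; reflexivity).
  assert (Hle: forall p q, d (T p) (T q) <= d p q).
  { intros p q. destruct (classic (p = q)) as [->|h]. rewrite !Hdd. lra. left; auto. }
  set (a := fun n => d (x n) (x (S n))).
  assert (Hadec: forall n, a (S n) < a n).
  { intro n. unfold a. apply HT. intro h. apply (hne n). auto. }
  assert (Hamono: forall n j, a (j + n)%nat <= a n).
  { intros n j; induction j; simpl. lra. specialize (Hadec (j+n)%nat). lra. }
  assert (Hinj: forall n k, x n <> x (n + S k)%nat).
  { intros n k heq.
    assert (h2: x (S n) = x (S (n + S k))) by (rewrite !hx, heq; reflexivity).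
    assert (a (n + S k)%nat = a n) by (unfold a; rewrite <- heq, <- h2; reflexivity).
    specialize (Hamono (S n) k). replace (k + S n)%nat with (n + S k)%nat in Hamono by lia.
    specialize (Hadec n). lra. }
  assert (Hinj': forall i j, i <> j -> x i <> x j).
  { intros i j hij. destruct (Nat.lt_total i j) as [h|[h|h]].
    - replace j with (i + S (j - i - 1))%nat by lia. apply Hinj.
    - lia.
    - replace i with (j + S (i - j - 1))%nat by lia. apply not_eq_sym, Hinj. }
  assert (Hdecay: forall k, (1 <= k)%nat -> forall t, t > 0 ->
            exists N, forall n, (n >= N)%nat -> d (x n) (x (n + k)%nat) < t).
  { intros k Hk. apply (decr_to_zero (fun n => d (x n) (x (n + k)%nat))).
    - intros; apply Hpos.
    - intro n. replace (S n + k)%nat with (S (n + k)) by lia. apply HT, Hinj'. lia.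
    - intros eps He. destruct (HTcm eps He) as [delta [Hd Hc]]. exists delta; split; auto.
      intros n h. replace (S n + k)%nat with (S (n + k)) by lia. apply Hc; auto. }
  assert (Hunif: forall t, t > 0 -> forall K, exists N, forall k n,
            (1 <= k <= K)%nat -> (n >= N)%nat -> d (x n) (x (n + k)%nat) < t).
  { intros t Ht K. induction K as [|K [N1 HN1]].
    - exists 0%nat. intros; lia.
    - destruct (Hdecay (S K) ltac:(lia) t Ht) as [N2 HN2].
      exists (Nat.max N1 N2). intros k n Hk Hn.
      destruct (Nat.eq_dec k (S K)) as [->|h].
      + apply HN2; lia.
      + apply HN1; lia. }
  assert (Hnu1: 1 <= INR nu) by (apply (le_INR 1); lia).
  assert (Hcauchy: gm_cauchy d x).
  { intros eps Heps. destruct (Hcm2 eps Heps) as [delta [Hd Hc]].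
    set (c := delta / INR nu).
    assert (Hc1: c * INR nu = delta) by (unfold c; field; lra).
    assert (Hc0: c > 0) by (unfold c; apply Rdiv_lt_0_compat; lra).
    assert (Hc2: c <= delta) by nra.
    destruct (Hunif c Hc0 nu) as [N HN].
    assert (Hcl: forall K k, (k <= K)%nat -> (1 <= k)%nat -> forall n, (n >= N)%nat ->
               d (x n) (x (n + k)%nat) < delta + eps).
    { induction K as [|K IH]; intros k HkK Hk n Hn; [lia|].
      destruct (Compare_dec.le_lt_dec k nu) as [hk|hk].
      - specialize (HN k n ltac:(lia) Hn). lra.
      - assert (Hprev: d (x n) (x (n + (k - nu))%nat) < delta + eps) by (apply IH; lia).
        assert (Hit: forall j, d (x (S j + n)%nat) (x (S j + (n + (k - nu)))%nat) <= eps).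
        { induction j.
          - simpl. rewrite !hx. apply Hc. exact Hprev.
          - change (S (S j) + n)%nat with (S (S j + n)).
            change (S (S j) + (n + (k - nu)))%nat with (S (S j + (n + (k - nu)))).
            rewrite !hx. apply Hc. lra. }
        specialize (Hit (nu - 1)%nat).
        replace (S (nu - 1) + n)%nat with (n + nu)%nat in Hit by lia.
        replace (S (nu - 1) + (n + (k - nu)))%nat with (n + k)%nat in Hit by lia.
        set (w := fun i => if (i <=? nu)%nat then x (n + i)%nat else x (n + k)%nat).
        assert (Hw1: forall i, (i <= nu)%nat -> w i = x (n + i)%nat).
        { intros i hi. unfold w. destruct (Nat.leb_spec i nu); [reflexivity|lia]. }
        assert (Hw2: w (S nu) = x (n + k)%nat).
        { unfold w. destruct (Nat.leb_spec (S nu) nu); [lia|reflexivity]. }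
        assert (Hp := Hpoly w).
        assert (Hwi: forall i j, (i <= S nu)%nat -> (j <= S nu)%nat -> i <> j -> w i <> w j).
        { intros i j hi hj hij.
          destruct (Nat.eq_dec i (S nu)) as [->|hi']; destruct (Nat.eq_dec j (S nu)) as [->|hj'].
          - lia.
          - rewrite Hw2, (Hw1 j) by lia. apply Hinj'. lia.
          - rewrite Hw2, (Hw1 i) by lia. apply Hinj'. lia.
          - rewrite (Hw1 i), (Hw1 j) by lia. apply Hinj'. lia. }
        specialize (Hp Hwi). rewrite Hw2, (Hw1 0%nat) in Hp by lia.
        rewrite Nat.add_0_r in Hp. simpl rsum in Hp.
        assert (Hs: rsum nu (fun i => d (w i) (w (S i))) < INR nu * c).
        { apply rsum_lt; auto. intros i hi. rewrite (Hw1 i), (Hw1 (S i)) by lia.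
          replace (n + S i)%nat with (n + i + 1)%nat by lia. apply HN; lia. }
        rewrite (Hw1 nu), Hw2 in Hp by lia. lra. }
    exists (S N). intros n m Hn. destruct n as [|n]; [lia|].
    assert (h := Hcl (1 + m)%nat (1 + m)%nat ltac:(lia) ltac:(lia) n ltac:(lia)).
    replace (S n + 1 + m)%nat with (S (n + (1 + m))) by lia.
    rewrite !hx. apply Hc. lra. }
  destruct (Hcomp x Hcauchy) as [z Hz].
  assert (Hz': forall t, t > 0 -> exists N, forall n, (n >= N)%nat -> d z (x n) < t).
  { intros t Ht. destruct (Hz t Ht) as [N HN]. exists N. intros n hn.
    specialize (HN n hn). unfold R_dist in HN. rewrite Rminus_0_r, Rabs_right in HN; auto.
    apply Rle_ge, Hpos. }
  assert (HTz: forall t, t > 0 -> exists N, forall n, (n >= N)%nat -> d (T z) (x n) < t).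
  { intros t Ht. destruct (Hz' t Ht) as [N HN]. exists (S N). intros n hn.
    destruct n as [|n]; [lia|]. rewrite hx. specialize (HN n ltac:(lia)).
    specialize (Hle z (x n)). lra. }
  exists z. split; [|split; auto].
  apply NNPP. intro hne'.
  set (D := d z (T z)).
  assert (HD: D > 0).
  { destruct (Hpos z (T z)) as [h|h]; auto. exfalso. apply hne'. symmetry. apply Hzero. auto. }
  set (c := D / (INR nu + 1)).
  assert (Hc1: c * (INR nu + 1) = D) by (unfold c; field; lra).
  assert (Hc0: c > 0) by (unfold c; apply Rdiv_lt_0_compat; lra).
  assert (HcD: c < D) by nra.
  destruct (Hz' c Hc0) as [N1 HN1].
  destruct (HTz c Hc0) as [N2 HN2].
  destruct (Hunif c Hc0 1%nat) as [N3 HN3].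
  set (N := Nat.max N1 (Nat.max N2 N3)).
  assert (Hxz: forall m, (m >= N)%nat -> x m <> z).
  { intros m hm h. specialize (HN2 m ltac:(lia)). rewrite h, Hsym in HN2. fold D in HN2. lra. }
  assert (HxTz: forall m, (m >= N)%nat -> x m <> T z).
  { intros m hm h. specialize (HN1 m ltac:(lia)). rewrite h in HN1. fold D in HN1. lra. }
  set (w := fun i => if (i =? 0)%nat then z else if (i <=? nu)%nat then x (N + i - 1)%nat else T z).
  assert (Hw0: w 0%nat = z) by reflexivity.
  assert (Hwm: forall i, (1 <= i <= nu)%nat -> w i = x (N + i - 1)%nat).
  { intros i hi. unfold w. destruct (Nat.eqb_spec i 0); [lia|].
    destruct (Nat.leb_spec i nu); [reflexivity|lia]. }
  assert (HwL: w (S nu) = T z).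
  { unfold w. simpl Nat.eqb. cbv iota. destruct (Nat.leb_spec (S nu) nu); [lia|reflexivity]. }
  assert (Hwi: forall i j, (i <= S nu)%nat -> (j <= S nu)%nat -> i <> j -> w i <> w j).
  { intros i j hi hj hij.
    assert (Hcase: forall i, (i <= S nu)%nat -> i = 0%nat \/ (1 <= i <= nu)%nat \/ i = S nu) by lia.
    destruct (Hcase i hi) as [->|[hi'| ->]]; destruct (Hcase j hj) as [->|[hj'| ->]];
      try lia;
      rewrite ?Hw0, ?HwL, ?(Hwm i hi'), ?(Hwm j hj');
      try (apply Hinj'; lia);
      try (apply not_eq_sym; apply Hxz; lia);
      try (apply Hxz; lia);
      try (apply not_eq_sym; apply HxTz; lia);
      try (apply HxTz; lia);
      auto. }
  assert (Hp := Hpoly w Hwi). rewrite Hw0, HwL in Hp. fold D in Hp.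
  assert (Hs: rsum (S nu) (fun i => d (w i) (w (S i))) < INR (S nu) * c).
  { apply rsum_lt; [lia|]. intros i hi.
    destruct (Nat.eq_dec i 0) as [->|h0].
    - rewrite Hw0, (Hwm 1%nat) by lia. replace (N + 1 - 1)%nat with N by lia. apply HN1; lia.
    - destruct (Nat.eq_dec i nu) as [->|h1].
      + rewrite HwL, (Hwm nu) by lia. rewrite Hsym. apply HN2; lia.
      + rewrite (Hwm i), (Hwm (S i)) by lia.
        replace (N + S i - 1)%nat with (N + i - 1 + 1)%nat by lia. apply HN3; lia. }
  rewrite S_INR in Hs. lra.
Qed.

Lemma orbit_fp (nu : nat) (X : Type) (d : X -> X -> R) (T : X -> X) (x0 : X) :
  (1 <= nu)%nat -> nu_gen_metric nu d -> gm_complete d -> ciric_matkowski d T ->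
  exists z, T z = z /\ gm_converges_strong d (fun n => Nat.iter n T x0) z.
Proof.
  intros Hnu Hm Hc Hcm.
  destruct (classic (exists n, Nat.iter (S n) T x0 = Nat.iter n T x0)) as [[n Hn]|Hno].
  - set (z := Nat.iter n T x0).
    assert (Hfix: T z = z) by exact Hn.
    assert (Hall: forall m, Nat.iter (m + n) T x0 = z).
    { induction m. reflexivity. change (T (Nat.iter (m + n) T x0) = z). rewrite IHm. exact Hfix. }
    destruct Hm as [Hpos [Hzero _]].
    assert (Hdd: forall y, d y y = 0) by (intro y; apply Hzero; reflexivity).
    exists z. split; auto. split.
    + intros eps He. exists n. intros p m Hp.
      replace p with ((p - n) + n)%nat by lia.
      replace ((p - n) + n + 1 + m)%nat with ((p - n + 1 + m) + n)%nat by lia.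
      rewrite !Hall, Hdd. lra.
    + intros eps He. exists n. intros p Hp. unfold R_dist.
      replace p with ((p - n) + n)%nat by lia. rewrite Hall, Hdd.
      rewrite Rminus_0_r, Rabs_R0. lra.
  - apply (orbit_main nu X d T); auto.
    intro n. apply (not_ex_all_not _ _ Hno n).
Qed.

Theorem corollary3p4 (nu : nat) (X : Type) (d : X -> X -> R) (T : X -> X) :
  inhabited X ->
  (1 <= nu)%nat ->
  nu_gen_metric nu d ->
  gm_complete d ->
  ciric_matkowski d T ->
  exists z : X, T z = z /\ (forall w : X, T w = w -> w = z) /\
    forall x : X, gm_converges_strong d (fun n => Nat.iter n T x) z.
Proof.
  intros [x0] Hnu Hm Hc Hcm.
  assert (Huniq: forall z w, T z = z -> T w = w -> w = z).
  { intros z w Hz Hw. apply NNPP. intro h.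
    destruct Hcm as [Hstr _]. specialize (Hstr w z h). rewrite Hz, Hw in Hstr. lra. }
  destruct (orbit_fp nu X d T x0 Hnu Hm Hc Hcm) as [z [Hz _]].
  exists z. split; [auto|split].
  - intros w Hw. apply (Huniq z w Hz Hw).
  - intro x. destruct (orbit_fp nu X d T x Hnu Hm Hc Hcm) as [z' [Hz' Hconv]].
    rewrite (Huniq z z' Hz Hz') in Hconv. exact Hconv.
Qed.
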